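(* Let $N\geq 1$ be an integer. Then for all $0<x<\pi/2$, \[ 3+\sum_{j=2}^{N}\frac{(2^{2j}-4)|B_{2j}|}{(2j)!}x^{2j}+\rho_N x^{2N+1}\tan x<2\left(\frac{x}{\sin x}\right)+\frac{x}{\tan x}<3+\sum_{j=2}^{N}\frac{(2^{2j}-4)|B_{2j}|}{(2j)!}x^{2j}+\varrho_N x^{2N+1}\tan x, \] with the best possible constants $\rho_N=0$ and $\varrho_N=\dfrac{4(2^{2N}-1)|B_{2N+2}|}{(2N+2)!}$.
   Context: The Bernoulli numbers $B_n$ are defined by $\frac{t}{e^t-1}=\sum_{n=0}^\infty B_n\frac{t^n}{n!}$ for $|t|<2\pi$. An empty sum is understood to be zero. *)

(* Defs.v *)
From Stdlib Require Import Reals Lra Lia Arith Factorial.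
Open Scope R_scope.

(* The Bernoulli numbers, characterised as in the paper by their generating
   function: t/(e^t - 1) = sum_{n>=0} B_n t^n / n!  for 0 < |t| < 2*pi
   (at t = 0 the left side is understood as its limit 1, which is then
   forced by continuity of the power series). *)
Definition bernoulli_gf (B : nat -> R) : Prop :=
  forall t : R, t <> 0 -> Rabs t < 2 * PI ->
    infinite_sum (fun n => B n * t ^ n / INR (fact n)) (t / (exp t - 1)).

Fixpoint sum_lt (n : nat) (f : nat -> R) : R :=
  match n with
  | O => 0
  | S k => sum_lt k f + f k
  end.

Definition partial_sum (B : nat -> R) (N : nat) (x : R) : R :=
  sum_lt (N - 1) (fun i => let j := (i + 2)%nat in
     (2 ^ (2 * j) - 4) * Rabs (B (2 * j)%nat) / INR (fact (2 * j)) * x ^ (2 * j)).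

Definition mid (x : R) : R := 2 * (x / sin x) + x / tan x.

(* Main.v *)
Require Import Defs.
From Stdlib Require Import Reals Arith Factorial.
Open Scope R_scope.
From Coquelicot Require Import Coquelicot.
From Stdlib Require Import Reals Lra Lia Factorial Wf_nat.
Open Scope R_scope.


Lemma cont_zero_right (f : R -> R) (d : R) : 0 < d -> continuity_pt f 0 ->
  (forall y, 0 < y < d -> f y = 0) -> f 0 = 0.
Proof.
  intros Hd Hc Hz.
  destruct (Req_dec (f 0) 0) as [E|E]; auto.
  unfold continuity_pt, continue_in, limit1_in, limit_in in Hc. simpl in Hc.
  destruct (Hc (Rabs (f 0)) (Rabs_pos_lt _ E)) as [al [Hal H]].
  assert (Hm : 0 < Rmin al d) by (apply Rmin_glb_lt; lra).
  pose proof (Rmin_r al d). pose proof (Rmin_l al d).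
  set (y := Rmin al d / 2) in *.
  assert (Hy1 : 0 < y) by (unfold y; lra).
  assert (Hy2 : y < d) by (unfold y; lra).
  assert (Hy3 : y < al) by (unfold y; lra).
  specialize (H y). rewrite Hz in H by lra.
  unfold R_dist in H. rewrite Rminus_0_l, Rabs_Ropp in H.
  assert (Rabs (y - 0) < al) by (rewrite Rminus_0_r, Rabs_pos_eq; lra).
  unfold D_x, no_cond in H.
  assert (Hne : 0 <> y) by lra.
  specialize (H (conj (conj I Hne) H2)). lra.
Qed.

Lemma radius_shift (a : nat -> R) (n : nat) :
  CV_radius (fun k => a (n + k)%nat) = CV_radius a.
Proof.
  induction n.
  - apply CV_radius_ext. intros; reflexivity.
  - rewrite <- IHn. rewrite <- (CV_radius_decr_1 (fun k => a (n + k)%nat)).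
    apply CV_radius_ext. intros k. unfold PS_decr_1. f_equal. lia.
Qed.

Lemma ps_zero_right (a : nat -> R) (d : R) : 0 < d ->
  (forall y, 0 < y < d -> Rbar_lt (Rabs y) (CV_radius a)) ->
  (forall y, 0 < y < d -> PSeries a y = 0) -> forall n, a n = 0.
Proof.
  intros Hd Hr Hz.
  assert (Hr0 : Rbar_lt (Rabs 0) (CV_radius a)).
  { rewrite Rabs_R0. specialize (Hr (d/2) ltac:(lra)). rewrite Rabs_pos_eq in Hr by lra.
    destruct (CV_radius a); simpl in *; auto; lra. }
  assert (HP : forall n, forall y, 0 < y < d -> PSeries (fun k => a (n + k)%nat) y = 0).
  { induction n.
    - intros y Hy. rewrite <- (Hz y Hy). apply PSeries_ext. intros; reflexivity.
    - intros y Hy.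
      assert (Hr' : forall y, 0 < y < d -> Rbar_lt (Rabs y) (CV_radius (fun k => a (n + k)%nat))).
      { intros; rewrite radius_shift; auto. }
      assert (Ha0 : a n = 0).
      { assert (H0 : PSeries (fun k => a (n + k)%nat) 0 = 0).
        { apply (cont_zero_right _ d Hd).
          apply PSeries_continuity. rewrite radius_shift; auto. exact IHn. }
        rewrite PSeries_0 in H0. rewrite Nat.add_0_r in H0. exact H0. }
      pose proof (PSeries_decr_1 (fun k => a (n + k)%nat) y (CV_radius_inside _ _ (Hr' y Hy))) as E.
      rewrite IHn in E by auto.
      replace (n + 0)%nat with n in E by lia. rewrite Ha0 in E.
      assert (PSeries (PS_decr_1 (fun k : nat => a (n + k)%nat)) y = 0).
      { apply (Rmult_eq_reg_l y); [lra | lra]. }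
      rewrite <- H. apply PSeries_ext. intros k. unfold PS_decr_1. f_equal. lia. }
  intros n. assert (H0 : PSeries (fun k => a (n + k)%nat) 0 = 0).
  { apply (cont_zero_right _ d Hd).
    apply PSeries_continuity. rewrite radius_shift; auto. apply HP. }
  rewrite PSeries_0 in H0. rewrite Nat.add_0_r in H0. exact H0.
Qed.

Lemma radius_from_conv (a : nat -> R) (R0 : R) :
  (forall r, 0 < r < R0 -> ex_series (fun n => a n * r ^ n)) ->
  forall y, Rabs y < R0 -> Rbar_lt (Rabs y) (CV_radius a).
Proof.
  intros Hc y Hy.
  pose proof (Rabs_pos y).
  set (r := (Rabs y + R0) / 2).
  assert (Hr : 0 < r < R0) by (unfold r; lra).
  assert (Hyr : Rabs y < r) by (unfold r; lra).
  pose proof (ex_series_lim_0 _ (Hc r Hr)) as Hl.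
  destruct (filterlim_bounded (V := R_NormedModule) (fun n => a n * r ^ n)) as [M HM].
  { exists 0. exact Hl. }
  destruct (CV_radius_bounded a) as [Hub _].
  assert (Hle : Rbar_le r (CV_radius a)).
  { apply Hub. exists M. intros n. specialize (HM n). exact HM. }
  destruct (CV_radius a) as [c| |]; simpl in *; auto; lra.
Qed.

Lemma radius_from_bound (a : nat -> R) (R0 : R) :
  (forall r, 0 < r < R0 -> exists M, forall n, Rabs (a n * r ^ n) <= M) ->
  forall y, Rabs y < R0 -> Rbar_lt (Rabs y) (CV_radius a).
Proof.
  intros Hc y Hy.
  pose proof (Rabs_pos y).
  set (r := (Rabs y + R0) / 2).
  assert (Hr : 0 < r < R0) by (unfold r; lra).
  assert (Hyr : Rabs y < r) by (unfold r; lra).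
  destruct (CV_radius_bounded a) as [Hub _].
  assert (Hle : Rbar_le r (CV_radius a)) by (apply Hub; apply Hc; auto).
  destruct (CV_radius a) as [c| |]; simpl in *; auto; lra.
Qed.

Lemma ex_pseries_le_radius (c : nat -> R) (r : R) :
  ex_pseries c r -> Rbar_le r (CV_radius c).
Proof.
  intros H.
  assert (H' : ex_series (fun n => c n * r ^ n)).
  { destruct H as [l Hl]. exists l. apply is_pseries_R. exact Hl. }
  pose proof (ex_series_lim_0 _ H') as Hl.
  destruct (filterlim_bounded (V := R_NormedModule) (fun n => c n * r ^ n)) as [M HM].
  { exists 0. exact Hl. }
  destruct (CV_radius_bounded c) as [Hub _].
  apply Hub. exists M. intros n. exact (HM n).
Qed.

Lemma pick_between (y : R) (A B : Rbar) :
  Rbar_lt (Rabs y) A -> Rbar_lt (Rabs y) B ->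
  exists r, Rabs y < r /\ Rbar_lt (Rabs r) A /\ Rbar_lt (Rabs r) B.
Proof.
  intros HA HB. pose proof (Rabs_pos y).
  destruct A as [a| |]; destruct B as [b| |]; simpl in *; try contradiction.
  - exists ((Rabs y + Rmin a b)/2).
    assert (Rabs y < Rmin a b) by (apply Rmin_glb_lt; auto).
    pose proof (Rmin_l a b); pose proof (Rmin_r a b).
    simpl. rewrite (Rabs_pos_eq ((Rabs y + Rmin a b) / 2)) by lra. lra.
  - exists ((Rabs y + a)/2). simpl. rewrite (Rabs_pos_eq ((Rabs y + a)/2)) by lra. lra.
  - exists ((Rabs y + b)/2). simpl. rewrite (Rabs_pos_eq ((Rabs y + b)/2)) by lra. lra.
  - exists (Rabs y + 1). simpl. split; [lra | split; exact I].
Qed.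

Lemma radius_mult (a b : nat -> R) (y : R) :
  Rbar_lt (Rabs y) (CV_radius a) -> Rbar_lt (Rabs y) (CV_radius b) ->
  Rbar_lt (Rabs y) (CV_radius (PS_mult a b)).
Proof.
  intros HA HB. destruct (pick_between _ _ _ HA HB) as [r [H1 [H2 H3]]].
  pose proof (ex_pseries_le_radius _ _ (ex_pseries_mult a b r H2 H3)) as H.
  destruct (CV_radius (PS_mult a b)); simpl in *; auto; lra.
Qed.

Lemma radius_minus (a b : nat -> R) (y : R) :
  Rbar_lt (Rabs y) (CV_radius a) -> Rbar_lt (Rabs y) (CV_radius b) ->
  Rbar_lt (Rabs y) (CV_radius (PS_minus a b)).
Proof.
  intros HA HB. destruct (pick_between _ _ _ HA HB) as [r [H1 [H2 H3]]].
  pose proof (ex_pseries_le_radius _ _ (ex_pseries_minus a b r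
     (CV_radius_inside _ _ H2) (CV_radius_inside _ _ H3))) as H.
  destruct (CV_radius (PS_minus a b)); simpl in *; auto; lra.
Qed.

Lemma ps_eq_right (a c : nat -> R) (d : R) : 0 < d ->
  (forall y, 0 < y < d -> Rbar_lt (Rabs y) (CV_radius a)) ->
  (forall y, 0 < y < d -> Rbar_lt (Rabs y) (CV_radius c)) ->
  (forall y, 0 < y < d -> PSeries a y = PSeries c y) -> forall n, a n = c n.
Proof.
  intros Hd Ha Hc Heq n.
  assert (H := ps_zero_right (PS_minus a c) d Hd
     (fun y Hy => radius_minus a c y (Ha y Hy) (Hc y Hy))).
  assert (forall y, 0 < y < d -> PSeries (PS_minus a c) y = 0).
  { intros y Hy. rewrite PSeries_minus. rewrite Heq; auto; ring.
    apply CV_radius_inside; auto. apply CV_radius_inside; auto. }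
  specialize (H H0 n). unfold PS_minus in H. simpl in H.
  change (a n - c n = 0) in H. lra.
Qed.

Lemma bound_from_radius (a : nat -> R) (s : R) :
  Rbar_lt (Rabs s) (CV_radius a) -> exists M, forall n, Rabs (a n * s ^ n) <= M.
Proof.
  intros H. pose proof (CV_disk_inside _ _ H) as Hs.
  pose proof (ex_series_lim_0 _ Hs) as Hl.
  destruct (filterlim_bounded (V := R_NormedModule) (fun n => Rabs (a n * s ^ n))) as [M HM].
  { exists 0. exact Hl. }
  exists M. intros n. specialize (HM n). unfold norm in HM; simpl in HM.
  unfold abs in HM; simpl in HM. rewrite Rabs_Rabsolu in HM. exact HM.
Qed.

Definition radius_ge (a : nat -> R) (R0 : R) :=
  forall y, Rabs y < R0 -> Rbar_lt (Rabs y) (CV_radius a).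

Lemma radius_dominated (a b : nat -> R) (R0 : R) :
  (forall k, Rabs (b k) <= Rabs (a k)) -> radius_ge a R0 -> radius_ge b R0.
Proof.
  intros Hd Ha. unfold radius_ge in *. apply radius_from_bound. intros r Hr.
  destruct (bound_from_radius a r) as [M HM].
  { apply Ha. rewrite Rabs_pos_eq; lra. }
  exists M. intros n. eapply Rle_trans; [|apply (HM n)].
  rewrite !Rabs_mult. apply Rmult_le_compat_r; [apply Rabs_pos| apply Hd].
Qed.

Lemma radius_scale (a : nat -> R) (c R0 : R) : 0 < c ->
  radius_ge a R0 -> radius_ge (fun k => c ^ k * a k) (R0 / c).
Proof.
  intros Hc Ha. unfold radius_ge in *. apply radius_from_bound. intros r Hr.
  destruct (bound_from_radius a (c * r)) as [M HM].
  { apply Ha. rewrite Rabs_pos_eq by nra.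
    destruct Hr as [Hr1 Hr2]. apply (Rmult_lt_compat_l c) in Hr2; auto.
    field_simplify in Hr2; lra. }
  exists M. intros n. eapply Rle_trans; [|apply (HM n)].
  right. f_equal. rewrite Rpow_mult_distr. ring.
Qed.

Lemma radius_even (a : nat -> R) (R0 : R) : 0 < R0 ->
  radius_ge a R0 -> radius_ge (fun k => a (2 * k)%nat) (R0 ^ 2).
Proof.
  intros H0 Ha. unfold radius_ge in *. apply radius_from_bound. intros r Hr.
  destruct (bound_from_radius a (sqrt r)) as [M HM].
  { apply Ha. rewrite Rabs_pos_eq by (apply sqrt_pos).
    rewrite <- (sqrt_pow2 R0) by lra. apply sqrt_lt_1; lra. }
  exists M. intros n. eapply Rle_trans; [|apply (HM (2 * n)%nat)].
  right. f_equal. f_equal. rewrite pow_mult. f_equal. rewrite <- Rsqr_pow2.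
  rewrite Rsqr_sqrt; lra.
Qed.

Lemma radius_odd (a : nat -> R) (R0 : R) : 0 < R0 ->
  radius_ge a R0 -> radius_ge (fun k => a (2 * k + 1)%nat) (R0 ^ 2).
Proof.
  intros H0 Ha. unfold radius_ge in *. apply radius_from_bound. intros r Hr.
  assert (Hs : 0 < sqrt r) by (apply sqrt_lt_R0; lra).
  destruct (bound_from_radius a (sqrt r)) as [M HM].
  { apply Ha. rewrite Rabs_pos_eq by (apply sqrt_pos).
    rewrite <- (sqrt_pow2 R0) by lra. apply sqrt_lt_1; lra. }
  exists (M / sqrt r). intros n. specialize (HM (2 * n + 1)%nat).
  rewrite pow_add, pow_mult in HM. rewrite <- Rsqr_pow2, Rsqr_sqrt in HM by lra.
  rewrite pow_1 in HM.
  apply (Rmult_le_reg_r (sqrt r)); auto.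
  replace (M / sqrt r * sqrt r) with M by (field; lra).
  replace (Rabs (a (2 * n + 1)%nat * r ^ n) * sqrt r) with
    (Rabs (a (2 * n + 1)%nat * r ^ n) * Rabs (sqrt r)) by (rewrite (Rabs_pos_eq (sqrt r)); lra).
  rewrite <- Rabs_mult.
  replace (a (2 * n + 1)%nat * r ^ n * sqrt r) with (a (2 * n + 1)%nat * (r ^ n * sqrt r)) by ring.
  exact HM.
Qed.

Lemma radius_ge_mono (a : nat -> R) (R0 R1 : R) : R1 <= R0 -> radius_ge a R0 -> radius_ge a R1.
Proof. intros H Ha y Hy. apply Ha. lra. Qed.

Definition bb (B : nat -> R) (n : nat) := B n / INR (fact n).
Definition gg (t : R) := t / (exp t - 1).

Lemma gf_is_series B (HB : bernoulli_gf B) t : t <> 0 -> Rabs t < 2 * PI ->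
  is_series (fun n => bb B n * t ^ n) (gg t).
Proof.
  intros H1 H2. eapply is_series_ext. 2: apply is_series_Reals, (HB t H1 H2).
  intros n. unfold bb. simpl. unfold Rdiv. ring.
Qed.

Lemma rad_bb B (HB : bernoulli_gf B) : radius_ge (bb B) (2 * PI).
Proof.
  intros y Hy. apply (radius_from_conv _ (2 * PI)); auto.
  intros r Hr. eexists. apply (gf_is_series B HB). lra. rewrite Rabs_pos_eq; lra.
Qed.

Definition ea (n : nat) := / INR (fact n).

Lemma rad_ea R0 : radius_ge ea R0.
Proof.
  intros y Hy. apply (radius_from_conv _ R0); auto.
  intros r Hr. exists (exp r). apply is_series_Reals.
  unfold exp. destruct (exist_exp r) as [l Hl]. simpl. exact Hl.
Qed.

Lemma exp_split x : exp x = PSeries (fun k => ea (2 * k)%nat) (x ^ 2) + x * PSeries (fun k => ea (2 * k + 1)%nat) (x ^ 2).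
Proof.
  rewrite exp_Reals. fold ea.
  apply PSeries_odd_even.
  - apply CV_radius_inside. apply (radius_even ea (Rabs x + 1)). pose proof (Rabs_pos x); lra. apply rad_ea.
    rewrite <- RPow_abs. pose proof (Rabs_pos x). nra.
  - apply CV_radius_inside. apply (radius_odd ea (Rabs x + 1)). pose proof (Rabs_pos x); lra. apply rad_ea.
    rewrite <- RPow_abs. pose proof (Rabs_pos x). nra.
Qed.

Lemma gg_neg t : 0 < t -> gg (- t) = gg t + t.
Proof.
  intros Ht. unfold gg. rewrite exp_Ropp.
  assert (H1 : 1 < exp t) by (rewrite <- exp_0; apply exp_increasing; lra).
  assert (H2 : / exp t < 1) by (apply (Rmult_lt_reg_l (exp t)); [lra|]; rewrite Rinv_r; lra).
  field. split; lra.
Qed.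

Lemma rad_E B (HB : bernoulli_gf B) : radius_ge (fun k => bb B (2 * k)%nat) ((2 * PI) ^ 2).
Proof. apply radius_even. pose proof PI_RGT_0; lra. apply rad_bb; auto. Qed.

Lemma rad_O B (HB : bernoulli_gf B) : radius_ge (fun k => bb B (2 * k + 1)%nat) ((2 * PI) ^ 2).
Proof. apply radius_odd. pose proof PI_RGT_0; lra. apply rad_bb; auto. Qed.

Lemma E_identity B (HB : bernoulli_gf B) x : 0 < x < PI ->
  PSeries (fun k => bb B (2 * k)%nat) ((2 * x) ^ 2) = gg (2 * x) + x.
Proof.
  intros Hx. set (t := 2 * x).
  assert (Ht : 0 < t < 2 * PI) by (unfold t; lra).
  assert (Hr : Rabs (t ^ 2) < (2 * PI) ^ 2).
  { rewrite Rabs_pos_eq by (apply pow_le; lra). nra. }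
  assert (HE := CV_radius_inside _ _ (rad_E B HB _ Hr)).
  assert (HO := CV_radius_inside _ _ (rad_O B HB _ Hr)).
  pose proof (PSeries_odd_even (bb B) t HE HO) as E1.
  pose proof (PSeries_odd_even (bb B) (- t) ) as E2.
  replace ((- t) ^ 2) with (t ^ 2) in E2 by ring.
  specialize (E2 HE HO).
  assert (G1 : PSeries (bb B) t = gg t).
  { apply is_series_unique. apply gf_is_series; auto. lra. rewrite Rabs_pos_eq; lra. }
  assert (G2 : PSeries (bb B) (- t) = gg (- t)).
  { apply is_series_unique. apply gf_is_series; auto. lra. rewrite Rabs_Ropp, Rabs_pos_eq; lra. }
  rewrite gg_neg in G2 by lra. unfold t in *. lra.
Qed.

Definition hh B (k : nat) := 4 ^ k * bb B (2 * k)%nat.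

Lemma rad_hh B (HB : bernoulli_gf B) : radius_ge (hh B) (PI ^ 2).
Proof.
  unfold hh. pose proof (radius_scale _ 4 _ ltac:(lra) (rad_E B HB)) as H.
  eapply radius_ge_mono; [|exact H]. right. field.
Qed.

Lemma H_identity B (HB : bernoulli_gf B) x : 0 < x < PI ->
  PSeries (hh B) (x ^ 2) = gg (2 * x) + x.
Proof.
  intros Hx. rewrite <- (E_identity B HB x Hx). unfold PSeries. apply Series_ext. intros n. unfold hh.
  replace ((2 * x) ^ 2) with (4 * x ^ 2) by ring. rewrite Rpow_mult_distr. ring.
Qed.

Definition chc (k : nat) := ea (2 * k)%nat.
Definition shc (k : nat) := ea (2 * k + 1)%nat.

Lemma rad_ch R1 : radius_ge chc R1.
Proof.
  apply (radius_ge_mono _ ((Rabs R1 + 1) ^ 2)).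
  { pose proof (Rabs_pos R1). pose proof (Rle_abs R1). nra. }
  apply radius_even. pose proof (Rabs_pos R1); lra. apply rad_ea.
Qed.

Lemma rad_sh R1 : radius_ge shc R1.
Proof.
  apply (radius_ge_mono _ ((Rabs R1 + 1) ^ 2)).
  { pose proof (Rabs_pos R1). pose proof (Rle_abs R1). nra. }
  apply radius_odd. pose proof (Rabs_pos R1); lra. apply rad_ea.
Qed.

Lemma rad_sh_all y : Rbar_lt (Rabs y) (CV_radius shc).
Proof. apply (rad_sh (Rabs y + 1)). lra. Qed.
Lemma rad_ch_all y : Rbar_lt (Rabs y) (CV_radius chc).
Proof. apply (rad_ch (Rabs y + 1)). lra. Qed.

Lemma exp_split' x : exp x = PSeries chc (x ^ 2) + x * PSeries shc (x ^ 2).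
Proof. exact (exp_split x). Qed.

Lemma HS_identity B (HB : bernoulli_gf B) x : 0 < x < PI ->
  PSeries (hh B) (x ^ 2) * PSeries shc (x ^ 2) = PSeries chc (x ^ 2).
Proof.
  intros Hx. rewrite H_identity by auto.
  pose proof (exp_split' x) as E1. pose proof (exp_split' (- x)) as E2.
  replace ((- x) ^ 2) with (x ^ 2) in E2 by ring.
  set (C := PSeries chc (x ^ 2)) in *. set (S := PSeries shc (x ^ 2)) in *.
  assert (Hp : exp x * exp (- x) = 1) by (rewrite <- exp_plus; replace (x + - x) with 0 by ring; apply exp_0).
  assert (Hlt : exp (- x) < exp x) by (apply exp_increasing; lra).
  assert (HxS : 0 < x * S) by lra.
  assert (HS : S <> 0) by (intro; subst; rewrite H in HxS; lra).
  pose proof (exp_pos x).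
  assert (E3 : exp (2 * x) = (C + x * S) ^ 2) by (rewrite <- E1; replace (2 * x) with (x + x) by ring; rewrite exp_plus; ring).
  unfold gg. rewrite E3.
  assert (Hd : (C + x * S) ^ 2 - 1 = 2 * x * S * (C + x * S)).
  { rewrite <- Hp, E1, E2. ring. }
  rewrite Hd.
  assert (Hq : C * C - x * x * S * S = 1) by (rewrite <- Hp, E1, E2; ring).
  field_simplify; [| split; [|split]; lra].
  rewrite <- Hq. field. lra.
Qed.

Lemma HS_coef B (HB : bernoulli_gf B) n : PS_mult (hh B) shc n = chc n.
Proof.
  revert n. apply (ps_eq_right _ _ (PI ^ 2)).
  - pose proof PI_RGT_0. nra.
  - intros y Hy. apply radius_mult. apply rad_hh; auto. rewrite Rabs_pos_eq; lra.
    apply rad_sh_all.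
  - intros y Hy. apply rad_ch_all.
  - intros y Hy. pose proof PI_RGT_0.
    assert (Hs : 0 < sqrt y < PI).
    { split. apply sqrt_lt_R0; lra. rewrite <- (sqrt_pow2 PI) by lra. apply sqrt_lt_1; lra. }
    replace y with (sqrt y ^ 2) by (rewrite <- Rsqr_pow2; apply Rsqr_sqrt; lra).
    rewrite PSeries_mult. apply HS_identity; auto.
    apply rad_hh; auto. rewrite Rabs_pos_eq by (apply pow_le; lra). nra.
    apply rad_sh_all.
Qed.

Lemma sin_series x : sin x = x * PSeries sin_n (x ^ 2).
Proof.
  unfold sin. destruct (exist_sin (Rsqr x)) as [a Ha]. f_equal.
  symmetry. apply is_series_unique. apply is_series_Reals.
  rewrite <- Rsqr_pow2. exact Ha.
Qed.

Lemma cos_series x : cos x = PSeries cos_n (x ^ 2).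
Proof.
  unfold cos. destruct (exist_cos (Rsqr x)) as [a Ha].
  symmetry. apply is_series_unique. apply is_series_Reals.
  rewrite <- Rsqr_pow2. exact Ha.
Qed.

Lemma abs_sin_n k : Rabs (sin_n k) = Rabs (shc k).
Proof.
  unfold sin_n, shc, ea. unfold Rdiv. rewrite Rabs_mult, pow_1_abs. ring.
Qed.
Lemma abs_cos_n k : Rabs (cos_n k) = Rabs (chc k).
Proof.
  unfold cos_n, chc, ea. unfold Rdiv. rewrite Rabs_mult, pow_1_abs. ring.
Qed.

Lemma rad_sin_n y : Rbar_lt (Rabs y) (CV_radius sin_n).
Proof.
  apply (radius_dominated shc _ (Rabs y + 1)). intros; rewrite abs_sin_n; lra.
  apply rad_sh. lra.
Qed.
Lemma rad_cos_n y : Rbar_lt (Rabs y) (CV_radius cos_n).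
Proof.
  apply (radius_dominated chc _ (Rabs y + 1)). intros; rewrite abs_cos_n; lra.
  apply rad_ch. lra.
Qed.

Definition uu B (k : nat) := (-1) ^ k * hh B k.

Lemma rad_uu B (HB : bernoulli_gf B) : radius_ge (uu B) (PI ^ 2).
Proof.
  apply (radius_dominated (hh B)). intros k. unfold uu. rewrite Rabs_mult, pow_1_abs. lra.
  apply rad_hh; auto.
Qed.

Lemma US_coef B (HB : bernoulli_gf B) n : PS_mult (uu B) sin_n n = cos_n n.
Proof.
  unfold PS_mult.
  transitivity (sum_f_R0 (fun k => hh B k * shc (n - k)%nat * (-1) ^ n) n).
  { apply sum_eq. intros i Hi. unfold uu, sin_n, shc, ea.
    replace ((-1) ^ n) with ((-1) ^ i * (-1) ^ (n - i)%nat) by (rewrite <- pow_add; f_equal; lia).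
    unfold Rdiv. ring. }
  rewrite <- scal_sum. pose proof (HS_coef B HB n) as H. unfold PS_mult in H. rewrite H.
  unfold chc, cos_n, ea. unfold Rdiv. ring.
Qed.

Lemma U_identity B (HB : bernoulli_gf B) x : 0 < x < PI ->
  PSeries (uu B) (x ^ 2) = x * cos x / sin x.
Proof.
  intros Hx. pose proof (sin_gt_0 x (proj1 Hx) (proj2 Hx)) as Hs.
  assert (Hy : Rabs (x ^ 2) < PI ^ 2) by (rewrite Rabs_pos_eq by (apply pow_le; lra); nra).
  assert (E : PSeries (uu B) (x ^ 2) * PSeries sin_n (x ^ 2) = PSeries cos_n (x ^ 2)).
  { rewrite <- PSeries_mult. apply PSeries_ext. apply US_coef; auto.
    apply rad_uu; auto. apply rad_sin_n. }
  rewrite cos_series, sin_series. rewrite <- E.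
  rewrite sin_series in Hs.
  assert (PSeries sin_n (x ^ 2) <> 0) by (intro H; rewrite H in Hs; lra).
  field. split; lra.
Qed.

Definition u4 B (k : nat) := 4 ^ k * uu B k.
Definition del1 (n : nat) := if Nat.eqb n 1 then 1 else 0.

Lemma rad_u4 B (HB : bernoulli_gf B) : radius_ge (u4 B) (PI ^ 2 / 4).
Proof. unfold u4. apply radius_scale. lra. apply rad_uu; auto. Qed.

Lemma rad_del1 R0 : radius_ge del1 R0.
Proof.
  apply (radius_dominated ea). intros k. unfold del1, ea.
  rewrite (Rabs_pos_eq (/ _)) by (left; apply Rinv_0_lt_compat, lt_0_INR, lt_O_fact).
  destruct (Nat.eqb k 1) eqn:E.
  - apply Nat.eqb_eq in E. subst. simpl. rewrite Rabs_R1. lra.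
  - rewrite Rabs_R0. left; apply Rinv_0_lt_compat, lt_0_INR, lt_O_fact.
  - apply rad_ea.
Qed.

Lemma PSeries_del1 y : PSeries del1 y = y.
Proof.
  assert (H1 : ex_pseries del1 y).
  { exact (CV_radius_inside _ _ (rad_del1 (Rabs y + 1) y ltac:(lra))). }
  assert (H2 : ex_pseries (PS_decr_1 del1) y).
  { apply CV_radius_inside. rewrite CV_radius_decr_1. apply (rad_del1 (Rabs y + 1)); lra. }
  rewrite (PSeries_decr_1 del1 y H1), (PSeries_decr_1 (PS_decr_1 del1) y H2).
  unfold PS_decr_1, del1. simpl.
  rewrite PSeries_const_0. ring.
Qed.

Lemma radius_plus' (a b : nat -> R) (y : R) :
  Rbar_lt (Rabs y) (CV_radius a) -> Rbar_lt (Rabs y) (CV_radius b) ->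
  Rbar_lt (Rabs y) (CV_radius (PS_plus a b)).
Proof.
  intros HA HB. destruct (pick_between _ _ _ HA HB) as [r [H1 [H2 H3]]].
  pose proof (ex_pseries_le_radius _ _ (ex_pseries_plus a b r
     (CV_radius_inside _ _ H2) (CV_radius_inside _ _ H3))) as H.
  destruct (CV_radius (PS_plus a b)); simpl in *; auto; lra.
Qed.

Lemma double_coef B (HB : bernoulli_gf B) n :
  PS_mult (uu B) (uu B) n = PS_plus (PS_mult (u4 B) (uu B)) del1 n.
Proof.
  pose proof PI_RGT_0 as Hpi.
  assert (Hpos : 0 < PI ^ 2 / 4) by nra.
  revert n. apply (ps_eq_right _ _ (PI ^ 2 / 4)); auto.
  - intros y Hy. apply radius_mult; apply rad_uu; auto; rewrite Rabs_pos_eq; lra.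
  - intros y Hy. apply radius_plus'. apply radius_mult.
    apply rad_u4; auto; rewrite Rabs_pos_eq; lra.
    apply rad_uu; auto; rewrite Rabs_pos_eq; lra.
    apply (rad_del1 (Rabs y + 1)); lra.
  - intros y Hy.
    assert (Hy1 : Rabs y < PI ^ 2) by (rewrite Rabs_pos_eq; lra).
    assert (Hy4 : Rabs y < PI ^ 2 / 4) by (rewrite Rabs_pos_eq; lra).
    rewrite PSeries_plus.
    2: { apply CV_radius_inside. apply radius_mult. apply rad_u4; auto. apply rad_uu; auto. }
    2: { apply CV_radius_inside. apply (rad_del1 (Rabs y + 1)); lra. }
    rewrite !PSeries_mult; try (apply rad_uu; auto); try (apply rad_u4; auto).
    rewrite PSeries_del1.
    set (x := sqrt y).
    assert (Hx : 0 < x < PI / 2).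
    { split. apply sqrt_lt_R0; lra.
      replace (PI / 2) with (sqrt ((PI / 2) ^ 2)) by (rewrite sqrt_pow2; lra).
      apply sqrt_lt_1; lra. }
    assert (Ey : y = x ^ 2) by (unfold x; rewrite <- Rsqr_pow2; rewrite Rsqr_sqrt; lra).
    assert (E4 : PSeries (u4 B) y = PSeries (uu B) ((2 * x) ^ 2)).
    { unfold PSeries. apply Series_ext. intros k. unfold u4. rewrite Ey.
      replace ((2 * x) ^ 2) with (4 * x ^ 2) by ring. rewrite Rpow_mult_distr. ring. }
    rewrite E4. rewrite Ey. rewrite !U_identity by (auto; lra).
    rewrite sin_2a, cos_2a.
    assert (0 < sin x) by (apply sin_gt_0; lra).
    assert (0 < cos x) by (apply cos_gt_0; lra).
    field. lra.
Qed.

Definition vv B (k : nat) := - uu B k.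

Lemma uu0 B (HB : bernoulli_gf B) : uu B 0 = 1.
Proof.
  pose proof (HS_coef B HB 0) as H. unfold PS_mult in H. simpl in H.
  unfold shc, chc, ea in H. simpl in H. unfold uu. simpl.
  rewrite Rinv_1 in H. lra.
Qed.

Lemma Fsum B (HB : bernoulli_gf B) n :
  sum_f_R0 (fun k => (4 ^ k - 1) * uu B k * uu B (n - k)%nat) n = - del1 n.
Proof.
  pose proof (double_coef B HB n) as H. unfold PS_mult, PS_plus in H.
  simpl in H. unfold plus in H; simpl in H.
  assert (E : sum_f_R0 (fun k => (4 ^ k - 1) * uu B k * uu B (n - k)%nat) n =
     sum_f_R0 (fun k => u4 B k * uu B (n - k)%nat) n - sum_f_R0 (fun k => uu B k * uu B (n - k)%nat) n).
  { rewrite <- minus_sum. apply sum_eq. intros i _. unfold u4. ring. }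
  rewrite E. rewrite H. ring.
Qed.

Lemma v1 B (HB : bernoulli_gf B) : vv B 1 = 1 / 3.
Proof.
  pose proof (Fsum B HB 1) as H. simpl in H. rewrite (uu0 B HB) in H.
  unfold del1 in H. simpl in H. unfold vv. lra.
Qed.

Lemma vrec B (HB : bernoulli_gf B) m :
  (4 ^ (m + 2) - 1) * vv B (m + 2)%nat =
  sum_f_R0 (fun j => (4 ^ (j + 1) - 1) * vv B (j + 1)%nat * vv B (m + 1 - j)%nat) m.
Proof.
  pose proof (Fsum B HB (S (S m))) as H.
  rewrite tech5 in H. rewrite decomp_sum in H by lia. simpl pred in H.
  match type of H with context [sum_f_R0 ?f m] =>
    rewrite (sum_eq f (fun j => (4 ^ (j + 1) - 1) * vv B (j + 1)%nat * vv B (m + 1 - j)%nat) m) in H end.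
  2: { intros i Hi. unfold vv.
       replace (S (S m) - S i)%nat with (m + 1 - i)%nat by lia.
       replace (S i) with (i + 1)%nat by lia. ring. }
  replace (S (S m) - S (S m))%nat with 0%nat in H by lia.
  rewrite (uu0 B HB) in H. unfold del1 in H. simpl Nat.eqb in H.
  replace (m + 2)%nat with (S (S m)) by lia.
  change (vv B (S (S m))) with (- uu B (S (S m))). simpl (4 ^ 0) in H. lra.
Qed.

Lemma sum_pos (f : nat -> R) m : (forall i, (i <= m)%nat -> 0 < f i) -> 0 < sum_f_R0 f m.
Proof.
  induction m; intros H. simpl. apply H; lia.
  rewrite tech5. assert (0 < sum_f_R0 f m) by (apply IHm; intros; apply H; lia).
  assert (0 < f (S m)) by (apply H; lia). lra.
Qed.

Lemma pow4_gt1 k : (0 < k)%nat -> 1 < 4 ^ k.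
Proof. intros. apply Rlt_pow_R1; auto; lra. Qed.

Lemma vpos B (HB : bernoulli_gf B) n : (1 <= n)%nat -> 0 < vv B n.
Proof.
  induction n as [n IH] using (well_founded_induction lt_wf). intros Hn.
  destruct n as [|[|m]]; [lia| rewrite (v1 B HB); lra|].
  pose proof (vrec B HB m) as E. replace (m + 2)%nat with (S (S m)) in E by lia.
  assert (Hs : 0 < sum_f_R0 (fun j => (4 ^ (j + 1) - 1) * vv B (j + 1)%nat * vv B (m + 1 - j)%nat) m).
  { apply sum_pos. intros i Hi.
    pose proof (pow4_gt1 (i + 1) ltac:(lia)).
    assert (0 < vv B (i + 1)) by (apply IH; lia).
    assert (0 < vv B (m + 1 - i)) by (apply IH; lia).
    apply Rmult_lt_0_compat; [apply Rmult_lt_0_compat|]; lra. }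
  pose proof (pow4_gt1 (S (S m)) ltac:(lia)).
  rewrite <- E in Hs. nra.
Qed.

Lemma vratio B (HB : bernoulli_gf B) n : (1 <= n)%nat -> vv B (S n) <= vv B n / 9.
Proof.
  induction n as [n IH] using (well_founded_induction lt_wf). intros Hn.
  destruct n as [|[|m]]; [lia| |].
  - pose proof (vrec B HB 0) as E. simpl in E. rewrite (v1 B HB) in E. rewrite (v1 B HB).
    simpl. lra.
  - pose proof (vrec B HB (S m)) as E. replace (S m + 2)%nat with (S (S (S m))) in E by lia.
    rewrite tech5 in E. replace (S m + 1 - S m)%nat with 1%nat in E by lia.
    rewrite (v1 B HB) in E.
    pose proof (vrec B HB m) as E2. replace (m + 2)%nat with (S (S m)) in E2 by lia.
    assert (Hle : sum_f_R0 (fun j => (4 ^ (j + 1) - 1) * vv B (j + 1)%nat * vv B (S m + 1 - j)%nat) m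
               <= sum_f_R0 (fun j => (4 ^ (j + 1) - 1) * vv B (j + 1)%nat * vv B (m + 1 - j)%nat * / 9) m).
    { apply sum_Rle. intros i Hi.
      pose proof (pow4_gt1 (i + 1) ltac:(lia)).
      assert (0 < vv B (i + 1)) by (apply vpos; auto; lia).
      assert (Hr : vv B (S (m + 1 - i)) <= vv B (m + 1 - i) / 9) by (apply IH; lia).
      replace (S m + 1 - i)%nat with (S (m + 1 - i)) by lia.
      assert (0 < (4 ^ (i + 1) - 1) * vv B (i + 1)) by (apply Rmult_lt_0_compat; lra).
      unfold Rdiv in Hr. nra. }
    rewrite <- scal_sum in Hle. rewrite <- E2 in Hle.
    set (P := 4 ^ S (S m)) in *.
    assert (HP : 4 ^ S (S (S m)) = 4 * P) by (unfold P; simpl; ring).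
    assert (HP1 : 1 < P) by (unfold P; apply pow4_gt1; lia).
    replace (S (S m) + 1)%nat with (S (S (S m))) in E by lia.
    rewrite HP in E.
    assert (Hv : 0 < vv B (S (S m))) by (apply vpos; auto; lia).
    set (v := vv B (S (S m))) in *. set (w := vv B (S (S (S m)))) in *.
    set (Sm := sum_f_R0 _ m) in *.
    replace (S m + 1)%nat with (S (S m)) in E by lia. fold P in E. fold v in E. assert (H4 : (4 * P - 1) * w <= (P - 1) * v * (4 / 9)) by lra.
    assert (H5 : (P - 1) * v * (4 / 9) <= (4 * P - 1) * (v / 9)) by nra.
    assert (0 < 4 * P - 1) by lra.
    apply (Rmult_le_reg_l (4 * P - 1)); lra.
Qed.

Definition ww B (k : nat) := 4 * (/ 4) ^ k * uu B k - uu B k.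

Lemma absB B (HB : bernoulli_gf B) k : (1 <= k)%nat ->
  Rabs (B (2 * k)%nat) / INR (fact (2 * k)) = vv B k / 4 ^ k.
Proof.
  intros Hk. pose proof (vpos B HB k Hk) as Hv.
  assert (E : vv B k = Rabs (uu B k)).
  { rewrite Rabs_left. reflexivity. unfold vv in Hv. lra. }
  rewrite E. unfold uu, hh, bb.
  pose proof (lt_0_INR _ (lt_O_fact (2 * k))) as Hf.
  rewrite !Rabs_mult, pow_1_abs. unfold Rdiv. rewrite Rabs_mult.
  rewrite (Rabs_pos_eq (4 ^ k)) by (apply pow_le; lra).
  rewrite (Rabs_pos_eq (/ INR _)) by (left; apply Rinv_0_lt_compat; lra).
  field. split; [apply pow_nonzero; lra | lra].
Qed.

Lemma ww_eq B (HB : bernoulli_gf B) k : (1 <= k)%nat ->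
  ww B k = (1 - 4 * (/ 4) ^ k) * vv B k.
Proof. intros. unfold ww, vv. ring. Qed.

Lemma ww_term B (HB : bernoulli_gf B) k x : (1 <= k)%nat ->
  (2 ^ (2 * k) - 4) * Rabs (B (2 * k)%nat) / INR (fact (2 * k)) * x ^ (2 * k)
  = ww B k * (x ^ 2) ^ k.
Proof.
  intros Hk. rewrite ww_eq by auto.
  replace ((2 ^ (2 * k) - 4) * Rabs (B (2 * k)%nat) / INR (fact (2 * k)) * x ^ (2 * k)) with
    ((2 ^ (2 * k) - 4) * (Rabs (B (2 * k)%nat) / INR (fact (2 * k))) * x ^ (2 * k)) by (unfold Rdiv; ring).
  rewrite absB by auto. rewrite !pow_mult. replace (2 ^ 2) with 4 by ring.
  rewrite pow_inv. field. apply pow_nonzero; lra.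
Qed.

Lemma ww0 B (HB : bernoulli_gf B) : ww B 0 = 3.
Proof. unfold ww. rewrite (uu0 B HB). simpl. ring. Qed.

Lemma ww1 B : ww B 1 = 0.
Proof. unfold ww. simpl. field. Qed.

Lemma ww_pos B (HB : bernoulli_gf B) k : (2 <= k)%nat -> 0 < ww B k.
Proof.
  intros Hk. rewrite (ww_eq B HB) by lia. pose proof (vpos B HB k ltac:(lia)).
  assert ((/ 4) ^ k <= / 16).
  { rewrite pow_inv. apply Rinv_le_contravar. lra.
    replace 16 with (4 ^ 2) by (simpl; ring). apply Rle_pow; [lra | lia]. }
  assert (0 < (/ 4) ^ k) by (apply pow_lt; lra).
  apply Rmult_lt_0_compat; lra.
Qed.

Lemma ww_ratio B (HB : bernoulli_gf B) k : (2 <= k)%nat -> ww B (S k) <= 5 / 36 * ww B k.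
Proof.
  intros Hk. rewrite !(ww_eq B HB) by lia.
  pose proof (vpos B HB k ltac:(lia)). pose proof (vpos B HB (S k) ltac:(lia)).
  pose proof (vratio B HB k ltac:(lia)).
  assert (Hq : (/ 4) ^ k <= / 16).
  { rewrite pow_inv. apply Rinv_le_contravar. lra.
    replace 16 with (4 ^ 2) by (simpl; ring). apply Rle_pow; [lra | lia]. }
  assert (0 < (/ 4) ^ k) by (apply pow_lt; lra).
  simpl pow. set (q := (/ 4) ^ k) in *.
  replace (4 * (/ 4 * q)) with q by field.
  set (v := vv B k) in *. set (w := vv B (S k)) in *.
  nra.
Qed.

Lemma ww_geom B (HB : bernoulli_gf B) n j : (2 <= n)%nat ->
  ww B (n + j)%nat <= ww B n * (5 / 36) ^ j.
Proof.
  intros Hn. induction j.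
  - rewrite Nat.add_0_r. simpl. lra.
  - replace (n + S j)%nat with (S (n + j)) by lia.
    eapply Rle_trans. apply ww_ratio; auto; lia.
    simpl. pose proof (pow_le (5/36) j ltac:(lra)). nra.
Qed.

Lemma U_is_series B (HB : bernoulli_gf B) y : 0 <= y < PI ^ 2 ->
  is_series (fun k => uu B k * y ^ k) (PSeries (uu B) y).
Proof.
  intros Hy. apply is_pseries_R. apply PSeries_correct. apply CV_radius_inside.
  apply rad_uu; auto. rewrite Rabs_pos_eq; lra.
Qed.

Lemma mid_eq B (HB : bernoulli_gf B) x : 0 < x < PI / 2 ->
  mid x = 4 * PSeries (uu B) ((x / 2) ^ 2) - PSeries (uu B) (x ^ 2).
Proof.
  intros Hx. pose proof PI_RGT_0.
  rewrite !(U_identity B HB) by lra.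
  unfold mid, tan.
  set (h := x / 2).
  assert (Hh : 0 < h < PI / 4) by (unfold h; lra).
  assert (Ex : x = 2 * h) by (unfold h; field). clearbody h. subst x.
  rewrite sin_2a, cos_2a.
  assert (0 < sin h) by (apply sin_gt_0; lra).
  assert (0 < cos h) by (apply cos_gt_0; lra).
  assert (0 < cos (2 * h)) by (apply cos_gt_0; lra).
  rewrite cos_2a in H2.
  pose proof (sin2_cos2 h) as Hsc. unfold Rsqr in Hsc. set (s := sin h) in *. set (c := cos h) in *. clearbody s c.
  replace (2 * (2 * h / (2 * s * c))) with (2 * (2 * h * (s * s + c * c) / (2 * s * c))) by (rewrite Hsc; unfold Rdiv; ring).
  field. repeat split; nra.
Qed.

Lemma mid_series B (HB : bernoulli_gf B) x : 0 < x < PI / 2 ->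
  is_series (fun k => ww B k * (x ^ 2) ^ k) (mid x).
Proof.
  intros Hx. pose proof PI_RGT_0. rewrite (mid_eq B HB x Hx).
  assert (H1 := U_is_series B HB (x ^ 2) ltac:(split; nra)).
  assert (H2 := U_is_series B HB ((x / 2) ^ 2) ltac:(split; nra)).
  apply (is_series_scal 4) in H2.
  pose proof (is_series_minus _ _ _ _ H2 H1) as H3.
  eapply is_series_ext; [|exact H3].
  intros n. unfold ww.
  replace ((x / 2) ^ 2) with (/ 4 * x ^ 2) by field. rewrite Rpow_mult_distr.
  set (p := (x ^ 2) ^ n). set (q := (/ 4) ^ n). set (u := uu B n).
  clearbody p q u. unfold plus, opp, scal, mult; simpl. repeat match goal with |- context [mult ?a ?b] => change (mult a b) with (a * b) end. ring.
Qed.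

Lemma sum_lt_S n f : sum_lt (S n) f = sum_lt n f + f n.
Proof. reflexivity. Qed.

Lemma partial_sum_S B N x : partial_sum B (S (S N)) x = partial_sum B (S N) x +
   (2 ^ (2 * (N + 2)) - 4) * Rabs (B (2 * (N + 2))%nat) / INR (fact (2 * (N + 2))) * x ^ (2 * (N + 2)).
Proof.
  unfold partial_sum. replace (S (S N) - 1)%nat with (S N) by lia.
  replace (S N - 1)%nat with N by lia. rewrite sum_lt_S. reflexivity.
Qed.

Lemma sum_identity B (HB : bernoulli_gf B) N x : (1 <= N)%nat ->
  sum_f_R0 (fun k => ww B k * (x ^ 2) ^ k) N = 3 + partial_sum B N x.
Proof.
  intros HN. induction N as [|N IH]; [lia|].
  destruct N as [|N].
  - simpl. rewrite (ww0 B HB), ww1. unfold partial_sum. simpl. ring.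
  - rewrite tech5, IH by lia. rewrite partial_sum_S.
    rewrite (ww_term B HB) by lia. replace (N + 2)%nat with (S (S N)) by lia. ring.
Qed.

Lemma Series_zero : Series (fun _ => 0) = 0.
Proof.
  transitivity (PSeries (fun _ => 0) 0). unfold PSeries. apply Series_ext. intros; ring. apply PSeries_const_0.
Qed.

Definition rr := 5 / 36.

Lemma tail_bounds B (HB : bernoulli_gf B) N x : (1 <= N)%nat -> 0 < x < PI / 2 ->
  let y := x ^ 2 in
  ww B (S N) * y ^ (S N) <= mid x - (3 + partial_sum B N x) <=
  ww B (S N) * y ^ (S N) / (1 - rr * y).
Proof.
  intros HN Hx y.
  pose proof PI_RGT_0. pose proof PI_4.
  assert (Hy : 0 < y < 4) by (unfold y; split; nra).
  pose proof (mid_series B HB x Hx) as Hs. fold y in Hs.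
  set (t := fun k => ww B k * y ^ k) in *.
  assert (Ht : ex_series t) by (eexists; exact Hs).
  apply is_series_unique in Hs. rewrite <- Hs.
  rewrite (Series_incr_n t (S N)) by (auto; lia). simpl pred.
  replace (sum_f_R0 t N) with (3 + partial_sum B N x) by (unfold t, y; symmetry; apply sum_identity; auto).
  replace (3 + partial_sum B N x + Series (fun k => t (S N + k)%nat) - (3 + partial_sum B N x))
    with (Series (fun k => t (S N + k)%nat)) by ring.
  assert (Ht2 : ex_series (fun k => t (S N + k)%nat)) by (apply ex_series_incr_n; auto).
  rewrite Series_incr_1 by auto.
  replace (S N + 0)%nat with (S N) by lia.
  assert (HA : 0 < ww B (S N)) by (apply ww_pos; auto; lia).
  assert (Hpos : forall k, 0 <= t (S N + S k)%nat).
  { intros k. unfold t. apply Rmult_le_pos. left; apply ww_pos; auto; lia. apply pow_le; lra. }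
  assert (Ht3 : ex_series (fun k => t (S N + S k)%nat)).
  { apply (ex_series_incr_1 (fun k => t (S N + k)%nat)) in Ht2. exact Ht2. }
  split.
  - assert (0 <= Series (fun k => t (S N + S k)%nat)).
    { rewrite <- Series_zero. apply Series_le; auto. intros; split; [lra | apply Hpos]. }
    unfold t at 1. lra.
  - set (A := ww B (S N)) in *.
    assert (Hq : Rabs (rr * y) < 1) by (unfold rr; rewrite Rabs_pos_eq; lra).
    assert (Hb : forall k, t (S N + S k)%nat <= (A * y ^ S N * (rr * y)) * (rr * y) ^ k).
    { intros k. unfold t.
      pose proof (ww_geom B HB (S N) (S k) ltac:(lia)) as G. fold A in G.
      rewrite pow_add. fold rr in G.
      replace ((A * y ^ S N * (rr * y)) * (rr * y) ^ k) with ((A * rr ^ S k) * (y ^ S N * y ^ S k))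
        by (simpl; rewrite Rpow_mult_distr; ring).
      apply Rmult_le_compat_r. apply Rmult_le_pos; apply pow_le; lra. exact G. }
    assert (Hle : Series (fun k => t (S N + S k)%nat) <= Series (fun k => (A * y ^ S N * (rr * y)) * (rr * y) ^ k)).
    { apply Series_le. intros k; split; [apply Hpos| apply Hb].
      eapply ex_series_ext; [|apply (ex_series_scal_l (A * y ^ S N * (rr * y))); apply ex_series_geom; exact Hq]. intros n. reflexivity. }
    rewrite Series_scal_l, Series_geom in Hle by auto.
    unfold t at 1. change (ww B (S N)) with A.
    assert (0 < 1 - rr * y) by (unfold rr; lra).
    set (Sr := Series (fun k => t (S N + S k)%nat)) in *.
    set (P := A * y ^ S N) in *. set (q := rr * y) in *.
    assert (Hsq : Sr * (1 - q) <= P * q).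
    { replace (P * q) with (P * q * / (1 - q) * (1 - q)) by (field; lra).
      apply Rmult_le_compat_r; lra. }
    apply (Rmult_le_reg_r (1 - q)); auto.
    replace (P / (1 - q) * (1 - q)) with P by (field; lra).
    nra.
Qed.

Lemma h_pos c : 0 < c < PI / 2 -> 0 < 2 * sin c - c * cos c.
Proof.
  intros Hc.
  destruct (MVT_cor2 (fun t => 2 * sin t - t * cos t) (fun t => cos t + t * sin t) 0 c) as [d [Hd1 Hd2]].
  lra.
  { intros t Ht. apply is_derive_Reals. auto_derive. auto. ring. }
  rewrite sin_0, cos_0 in Hd1.
  assert (0 < cos d) by (apply cos_gt_0; lra).
  assert (0 < sin d) by (apply sin_gt_0; lra).
  assert (0 < cos d + d * sin d) by nra.
  nra.
Qed.

Lemma tan_ineq x : 0 < x < PI / 2 -> x * cos x <= sin x * (1 - x ^ 2 / 4).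
Proof.
  intros Hx.
  destruct (MVT_cor2 (fun t => sin t * (1 - t ^ 2 / 4) - t * cos t)
                     (fun t => t / 4 * (2 * sin t - t * cos t)) 0 x) as [d [Hd1 Hd2]].
  lra.
  { intros t Ht. apply is_derive_Reals. auto_derive. auto. field. }
  rewrite sin_0, cos_0 in Hd1.
  pose proof (h_pos d ltac:(lra)).
  assert (0 < d / 4 * (2 * sin d - d * cos d)) by (apply Rmult_lt_0_compat; lra).
  nra.
Qed.

Lemma cos_lb x : 0 < x -> 1 - x ^ 2 / 2 <= cos x.
Proof.
  intros Hx. replace x with (2 * (x / 2)) by field. rewrite cos_2a_sin.
  pose proof (sin_lt_x (x / 2) ltac:(lra)).
  destruct (Rle_lt_dec 0 (sin (x / 2))).
  - nra.
  - pose proof (SIN_bound (x/2)). 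
    assert (Hs : sin (x/2) * sin (x/2) <= (x/2) * (x/2)).
    { (* sin(x/2) negative: use |sin t| <= |t| *)
      pose proof (sin_lt_x (x/2) ltac:(lra)).
      assert (Hn : - sin (x / 2) = sin (- (x / 2))) by (rewrite sin_neg; ring).
      destruct (Rle_lt_dec (x / 2) 1).
      + assert (0 < - (x/2) + PI) by (pose proof PI_RGT_0; pose proof PI2_3_2; lra).
        assert (- sin (x / 2) <= x / 2).
        { rewrite Hn. assert (Hs2 : sin (x / 2) >= 0) by (apply Rle_ge; left; apply sin_gt_0; pose proof PI2_3_2; lra). lra. }
        nra.
      + nra. }
    nra.
Qed.

Lemma varrho_eq B (HB : bernoulli_gf B) N : (1 <= N)%nat ->
  4 * (2 ^ (2 * N) - 1) * Rabs (B (2 * N + 2)%nat) / INR (fact (2 * N + 2)) = ww B (S N).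
Proof.
  intros HN. rewrite (ww_eq B HB) by lia.
  replace (2 * N + 2)%nat with (2 * S N)%nat by lia.
  replace (4 * (2 ^ (2 * N) - 1) * Rabs (B (2 * S N)%nat) / INR (fact (2 * S N)))
    with (4 * (2 ^ (2 * N) - 1) * (Rabs (B (2 * S N)%nat) / INR (fact (2 * S N)))) by (unfold Rdiv; ring).
  rewrite (absB B HB) by lia. rewrite pow_mult. replace (2 ^ 2) with 4 by ring.
  rewrite pow_inv. simpl pow. field. apply pow_nonzero. lra.
Qed.

Lemma upper_key N x : 0 < x < PI / 2 ->
  let y := x ^ 2 in y ^ S N / (1 - rr * y) < x ^ (2 * N + 1) * tan x.
Proof.
  intros Hx y. pose proof PI_4. pose proof PI_RGT_0.
  assert (Hy : 0 < y < 4) by (unfold y; split; nra).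
  pose proof (tan_ineq x Hx) as T. fold y in T.
  assert (Hc : 0 < cos x) by (apply cos_gt_0; lra).
  assert (Hs : 0 < sin x) by (apply sin_gt_0; lra).
  assert (E : y ^ S N = x ^ (2 * N + 1) * x).
  { unfold y. rewrite <- pow_mult. replace (2 * S N)%nat with (S (2 * N + 1)) by lia. simpl. ring. }
  rewrite E. unfold tan.
  assert (Hp : 0 < x ^ (2 * N + 1)) by (apply pow_lt; lra).
  assert (Hr : 0 < 1 - rr * y) by (unfold rr; lra).
  unfold Rdiv. rewrite Rmult_assoc. apply Rmult_lt_compat_l; auto.
  apply (Rmult_lt_reg_r ((1 - rr * y) * cos x)). nra.
  replace (x * / (1 - rr * y) * ((1 - rr * y) * cos x)) with (x * cos x) by (field; lra).
  replace (sin x * / cos x * ((1 - rr * y) * cos x)) with (sin x * (1 - rr * y)) by (field; lra).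
  unfold rr in *. nra.
Qed.

Theorem theorem10 (B : nat -> R) (HB : bernoulli_gf B) (N : nat) (HN : (1 <= N)%nat) :
  let rho := 0 in
  let varrho := 4 * (2 ^ (2 * N) - 1) * Rabs (B (2 * N + 2)%nat) / INR (fact (2 * N + 2)) in
  (forall x : R, 0 < x < PI / 2 ->
     3 + partial_sum B N x + rho * x ^ (2 * N + 1) * tan x < mid x /\
     mid x < 3 + partial_sum B N x + varrho * x ^ (2 * N + 1) * tan x)
  /\ (forall c : R,
        (forall x : R, 0 < x < PI / 2 ->
           3 + partial_sum B N x + c * x ^ (2 * N + 1) * tan x < mid x) ->
        c <= rho)
  /\ (forall c : R,
        (forall x : R, 0 < x < PI / 2 ->
           mid x < 3 + partial_sum B N x + c * x ^ (2 * N + 1) * tan x) ->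
        varrho <= c).
Proof.
  intros rho varrho.
  assert (Hv : varrho = ww B (S N)) by (apply varrho_eq; auto).
  clearbody varrho. subst varrho. unfold rho. clear rho.
  set (A := ww B (S N)).
  assert (HA : 0 < A) by (apply ww_pos; auto; lia).
  pose proof PI_RGT_0 as Hpi. pose proof PI_4 as Hpi4. pose proof PI2_3_2 as Hpi3.
  split; [|split].
  - intros x Hx. pose proof (tail_bounds B HB N x HN Hx) as T. cbv zeta in T. fold A in T.
    pose proof (upper_key N x Hx) as U. cbv zeta in U.
    assert (0 < x ^ 2) by nra.
    assert (0 < (x ^ 2) ^ S N) by (apply pow_lt; auto).
    split.
    + assert (0 < A * (x ^ 2) ^ S N) by (apply Rmult_lt_0_compat; auto). lra.
    + assert (A * ((x ^ 2) ^ S N / (1 - rr * x ^ 2)) < A * (x ^ (2 * N + 1) * tan x))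
        by (apply Rmult_lt_compat_l; auto).
      unfold Rdiv in *. nra.
  - intros c Hc. destruct (Rle_lt_dec c 0) as [|Hcpos]; auto. exfalso.
    set (K := A * 4 ^ S N / (1 - rr * 4)).
    assert (HK : 0 < K) by (unfold K, rr; apply Rdiv_lt_0_compat; [apply Rmult_lt_0_compat; [auto| apply pow_lt; lra] | lra]).
    set (e := Rmin (1 / 2) (c / (4 * K))).
    assert (He : 0 < e) by (unfold e; apply Rmin_glb_lt; [lra | apply Rdiv_lt_0_compat; lra]).
    assert (He1 : e <= 1 / 2) by (unfold e; apply Rmin_l).
    assert (He2 : e <= c / (4 * K)) by (unfold e; apply Rmin_r).
    set (x := PI / 2 - e).
    assert (Hx : 0 < x < PI / 2) by (unfold x; lra).
    specialize (Hc x Hx).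
    pose proof (tail_bounds B HB N x HN Hx) as T. cbv zeta in T. fold A in T.
    assert (Hy : 0 < x ^ 2 < 4) by (split; nra).
    assert (HTK : A * (x ^ 2) ^ S N / (1 - rr * x ^ 2) <= K).
    { unfold K. unfold Rdiv. apply Rmult_le_compat.
      - apply Rmult_le_pos; [lra| apply pow_le; lra].
      - left; apply Rinv_0_lt_compat; unfold rr; lra.
      - apply Rmult_le_compat_l; [lra|]. apply pow_incr; lra.
      - apply Rinv_le_contravar; unfold rr; nra. }
    assert (Hco : cos x = sin e) by (unfold x; apply cos_shift).
    assert (Hsi : sin x = cos e) by (unfold x; apply sin_shift).
    assert (Hse : 0 < sin e) by (apply sin_gt_0; lra).
    pose proof (sin_lt_x e He).
    pose proof (sin2_cos2 e) as Hsc. unfold Rsqr in Hsc.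
    assert (Hce : 0 < cos e) by (apply cos_gt_0; lra).
    assert (Hce2 : 1 / 2 <= cos e) by nra.
    assert (Hxp : 1 <= x ^ (2 * N + 1)) by (apply pow_R1_Rle; unfold x; lra).
    unfold tan in Hc. rewrite Hco, Hsi in Hc.
    assert (H1 : c * x ^ (2 * N + 1) * (cos e / sin e) < K) by lra.
    assert (H2 : c * x ^ (2 * N + 1) * cos e < K * sin e).
    { apply (Rmult_lt_compat_r (sin e)) in H1; auto.
      replace (c * x ^ (2 * N + 1) * (cos e / sin e) * sin e) with (c * x ^ (2 * N + 1) * cos e) in H1 by (field; lra).
      exact H1. }
    assert (H3 : K * sin e <= c / 4).
    { assert (Hk : K * sin e <= K * (c / (4 * K))) by (apply Rmult_le_compat_l; lra).
      replace (K * (c / (4 * K))) with (c / 4) in Hk by (field; lra). exact Hk. }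
    assert (H4 : c / 2 <= c * x ^ (2 * N + 1) * cos e).
    { assert (c * 1 * (1/2) <= c * x ^ (2 * N + 1) * cos e).
      { apply Rmult_le_compat; try lra. apply Rmult_le_compat_l; lra. }
      lra. }
    lra.
  - intros c Hc. destruct (Rle_lt_dec A c) as [|Hlt]; auto. exfalso.
    set (x := Rmin 1 (1 - c / A)).
    assert (Hca : 0 < 1 - c / A).
    { assert (c / A < 1) by (apply (Rmult_lt_reg_r A); auto; unfold Rdiv; rewrite Rmult_assoc, Rinv_l; lra). lra. }
    assert (Hx0 : 0 < x) by (unfold x; apply Rmin_glb_lt; lra).
    assert (Hx1 : x <= 1) by (unfold x; apply Rmin_l).
    assert (Hx2 : x <= 1 - c / A) by (unfold x; apply Rmin_r).
    assert (Hx : 0 < x < PI / 2) by lra.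
    specialize (Hc x Hx).
    pose proof (tail_bounds B HB N x HN Hx) as T. cbv zeta in T. fold A in T.
    assert (E : (x ^ 2) ^ S N = x ^ (2 * N + 1) * x).
    { rewrite <- pow_mult. replace (2 * S N)%nat with (S (2 * N + 1)) by lia. simpl. ring. }
    rewrite E in T.
    assert (Hp : 0 < x ^ (2 * N + 1)) by (apply pow_lt; lra).
    assert (H1 : A * x < c * tan x).
    { assert (A * (x ^ (2 * N + 1) * x) < c * x ^ (2 * N + 1) * tan x) by lra.
      apply (Rmult_lt_reg_l (x ^ (2 * N + 1))); auto. nra. }
    assert (Hcos : 0 < cos x) by (apply cos_gt_0; lra).
    assert (Hsin : 0 < sin x) by (apply sin_gt_0; lra).
    unfold tan in H1.
    assert (H2 : A * x * cos x < c * sin x).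
    { apply (Rmult_lt_compat_r (cos x)) in H1; auto.
      replace (c * (sin x / cos x) * cos x) with (c * sin x) in H1 by (field; lra). exact H1. }
    pose proof (sin_lt_x x Hx0).
    pose proof (cos_lb x Hx0).
    assert (Hc1 : c / A <= 1 - x ^ 2 / 2) by nra.
    assert (H4 : A * (c / A) <= A * cos x) by (apply Rmult_le_compat_l; lra).
    replace (A * (c / A)) with c in H4 by (field; lra).
    assert (Hpos : 0 < A * x * cos x) by (apply Rmult_lt_0_compat; [apply Rmult_lt_0_compat|]; lra).
    destruct (Rle_lt_dec c 0) as [Hc0|Hc0].
    - assert (c * sin x <= 0) by nra. lra.
    - assert (c * sin x < c * x) by (apply Rmult_lt_compat_l; lra).
      assert (A * x * cos x < c * x) by lra.
      assert (A * cos x < c) by (apply (Rmult_lt_reg_r x); lra).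
      lra.
Qed.
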